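(* Let $G$ be a digraph such that $d^+_G(x)+d^-_G(x)\ge |G|+3$ for every vertex $x\in G$ and $d^+_G(x)+d^-_G(y)\ge |G|+1$ for every pair of vertices $x,y\in G$. Let $z_1,z_2$ be distinct vertices of $G$ such that $z_1z_2\notin E(G)$. Then there exists a vertex $a\in N^+_G(z_1)\cap N^-_G(z_2)$ such that $G-\{z_1,z_2,a\}$ is strongly connected.
   Context: Digraphs have no loops and at most one edge in each direction between any two vertices. $N^+_G(x)$ and $N^-_G(x)$ are the out- and in-neighbourhoods of $x$ in $G$, and $d^\pm_G(x)=|N^\pm_G(x)|$. A digraph is strongly connected if for every ordered pair $x,y$ of vertices there is a directed $x$-$y$ path. *)

(* Defs.v *)
(* A digraph on a finite vertex type T is an irreflexive
   relation e : rel T (e x y = there is an arc x -> y); a relation automatically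
   has at most one arc in each direction between two vertices. *)
From mathcomp Require Import all_boot.
Set Implicit Arguments. Unset Strict Implicit. Unset Printing Implicit Defensive.

Definition loopless (T : finType) (e : rel T) : Prop := forall x, ~~ e x x.

Definition outN (T : finType) (e : rel T) (x : T) : {set T} := [set y | e x y].
Definition inN (T : finType) (e : rel T) (x : T) : {set T} := [set y | e y x].

Definition induced_rel (T : finType) (e : rel T) (S : {set T}) : rel T :=
  fun u v => [&& u \in S, v \in S & e u v].

Definition strongly_connected_on (T : finType) (e : rel T) (S : {set T}) : Prop :=
  forall x y, x \in S -> y \in S -> connect (induced_rel e S) x y.

(* Main.v *)
Require Import Defs.
From mathcomp Require Import all_boot.
From mathcomp Require Import zify.
From Stdlib Require Import Classical.

Section Aux.
Variable T : finType.

Lemma cardC1U (x : T) (A : {set T}) : x \notin A -> #|~: (x |: A)| + #|A| + 1 = #|T|.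
Proof. move=> xA; have := cardsC (x |: A); rewrite cardsU1 xA /=; lia. Qed.

Lemma card_lt_T (A : {set T}) (x : T) : x \notin A -> #|A| <= #|T| - 1.
Proof.
move=> xA; have sub : A \subset ~: [set x].
  by apply/subsetP => w wA; rewrite !inE; apply/eqP => wx; rewrite -wx wA in xA.
have := subset_leq_card sub; rewrite cardsC1; lia.
Qed.
End Aux.
Arguments cardC1U {T x A}.
Arguments card_lt_T {T A x}.

Lemma fail_struct (T : finType) (e : rel T) (Hloop : loopless e)
  (Hdeg : forall x, #|outN e x| + #|inN e x| >= #|T| + 3)
  (Hpair : forall x y, x != y -> #|outN e x| + #|inN e y| >= #|T| + 1)
  (S : {set T}) (HS : #|S| = 3) (Hnsc : ~ strongly_connected_on e (~: S)) :
  exists X Y : {set T},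
    (forall v, (v \in ~: S) = (v \in X) || (v \in Y)) /\
    (forall v, v \in X -> v \notin Y) /\
    #|X| + #|Y| + 3 = #|T| /\
    (forall x y, x \in X -> y \in Y -> ~~ e x y) /\
    1 < #|X| /\ 1 < #|Y| /\
    (forall s x, s \in S -> x \in X -> e x s) /\
    (forall s y, s \in S -> y \in Y -> e s y).
Proof.
set S' := ~: S.
set r := induced_rel e S'.
have [u [v [uS vS nc]]] : exists u v, [/\ u \in S', v \in S' & ~~ connect r u v].
  case: (boolP [exists u, exists v, [&& u \in S', v \in S' & ~~ connect r u v]]).
    by move=> /existsP[u /existsP[v /and3P[a b c]]]; exists u, v.
  move=> H; exfalso; apply: Hnsc => x y xS yS.
  apply/negPn/negP => ncx; move/negP: H; apply; apply/existsP; exists x.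
  by apply/existsP; exists y; rewrite xS yS ncx.
set X := [set w in S' | connect r u w].
set Y := S' :\: X.
have memXY : forall w, (w \in S') = (w \in X) || (w \in Y).
  by move=> w; rewrite !inE; case: (w \in S); case: (connect r u w).
have disj : forall w, w \in X -> w \notin Y by move=> w wX; rewrite inE wX.
have YS : forall w, w \in Y -> w \in S' by move=> w; rewrite inE => /andP[].
have XS : forall w, w \in X -> w \in S' by move=> w; rewrite inE => /andP[].
have cardXY : #|X| + #|Y| + 3 = #|T|.
  have := cardsC S; rewrite HS -/S' => <-.
  have := cardsID X S'; rewrite -/Y.
  have -> : S' :&: X = X by apply/setIidPr/subsetP => w /XS.
  lia.
have noarc : forall x y, x \in X -> y \in Y -> ~~ e x y.
  move=> x y xX yY; apply/negP => exy.
  have yX' : y \in X.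
    move: (xX); rewrite inE => /andP[xS' cux]; rewrite inE (YS _ yY) /=.
    apply: connect_trans cux _; apply: connect1.
    by rewrite /r /induced_rel xS' (YS _ yY) exy.
  by move: (disj _ yX'); rewrite yY.
have uX : u \in X by rewrite inE uS connect0.
have vY : v \in Y by rewrite in_setD vS andbT in_set vS /= nc.
have outsub : forall x, x \in X -> outN e x \subset ~: (x |: Y).
  move=> x xX; apply/subsetP => w; rewrite inE => exw; rewrite in_setC in_setU1 negb_or; apply/andP; split.
    by apply/eqP => wx; move: exw; rewrite wx; move: (Hloop x) => /negbTE ->.
  by apply/negP => wY; move: (noarc _ _ xX wY); rewrite exw.
have insub : forall y, y \in Y -> inN e y \subset ~: (y |: X).
  move=> y yY; apply/subsetP => w; rewrite inE => ewy; rewrite in_setC in_setU1 negb_or; apply/andP; split.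
    by apply/eqP => wy; move: ewy; rewrite wy; move: (Hloop y) => /negbTE ->.
  by apply/negP => wX; move: (noarc _ _ wX yY); rewrite ewy.
have yX : forall y, y \in Y -> y \notin X.
  by move=> y yY; apply/negP => yX; move: (disj _ yX); rewrite yY.
have outb : forall x, x \in X -> #|outN e x| + #|Y| + 1 <= #|T|.
  move=> x xX; have := subset_leq_card (outsub x xX).
  have := cardC1U (disj x xX); lia.
have inb : forall y, y \in Y -> #|inN e y| + #|X| + 1 <= #|T|.
  move=> y yY; have := subset_leq_card (insub y yY).
  have := cardC1U (yX y yY); lia.
have xneqy : forall x y, x \in X -> y \in Y -> x != y.
  by move=> x y xX yY; apply/eqP => xy; move: (disj _ xX); rewrite xy yY.
exists X, Y; split=> //; split=> //; split=> //; split=> //.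
split.
  have hu : u \notin inN e u by rewrite inE Hloop.
  have := Hdeg u; have := outb u uX; have := card_lt_T hu; lia.
split.
  have hv : v \notin outN e v by rewrite inE Hloop.
  have := Hdeg v; have := inb v vY; have := card_lt_T hv; lia.
split.
  move=> s x sS xX.
  have eqo : outN e x = ~: (x |: Y).
    apply/eqP; rewrite eqEcard outsub //=.
    have := Hpair _ _ (xneqy x v xX vY); have := inb v vY.
    have := cardC1U (disj x xX); lia.
  have : s \in outN e x.
    rewrite eqo in_setC in_setU1 negb_or; apply/andP; split.
      by apply/eqP => sx; move: (XS x xX); rewrite in_setC -sx sS.
    by apply/negP => sY; move: (YS s sY); rewrite in_setC sS.
  by rewrite inE.
move=> s y sS yY.
have eqi : inN e y = ~: (y |: X).
  apply/eqP; rewrite eqEcard insub //=.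
  have := Hpair _ _ (xneqy u y uX yY); have := outb u uX.
  have := cardC1U (yX y yY); lia.
have : s \in inN e y.
  rewrite eqi in_setC in_setU1 negb_or; apply/andP; split.
    by apply/eqP => sy; move: (YS y yY); rewrite in_setC -sy sS.
  by apply/negP => sX; move: (XS s sX); rewrite in_setC sS.
by rewrite inE.
Qed.

Lemma outb_gen (T : finType) (e : rel T) (Hloop : loopless e) x (A : {set T}) :
  x \notin A -> (forall w, w \in A -> ~~ e x w) -> #|outN e x| + #|A| + 1 <= #|T|.
Proof.
move=> xA H.
have sub : outN e x \subset ~: (x |: A).
  apply/subsetP => w; rewrite inE => exw; rewrite in_setC in_setU1 negb_or; apply/andP; split.
    by apply/eqP => wx; move: exw; rewrite wx; move: (Hloop x) => /negbTE ->.
  by apply/negP => wA; move: (H _ wA); rewrite exw.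
have := subset_leq_card sub; have := cardC1U xA; lia.
Qed.

Lemma inb_gen (T : finType) (e : rel T) (Hloop : loopless e) x (A : {set T}) :
  x \notin A -> (forall w, w \in A -> ~~ e w x) -> #|inN e x| + #|A| + 1 <= #|T|.
Proof.
move=> xA H.
have sub : inN e x \subset ~: (x |: A).
  apply/subsetP => w; rewrite inE => exw; rewrite in_setC in_setU1 negb_or; apply/andP; split.
    by apply/eqP => wx; move: exw; rewrite wx; move: (Hloop x) => /negbTE ->.
  by apply/negP => wA; move: (H _ wA); rewrite exw.
have := subset_leq_card sub; have := cardC1U xA; lia.
Qed.

Arguments outb_gen {T e} Hloop {x A}.
Arguments inb_gen {T e} Hloop {x A}.

Lemma core (T : finType) (e : rel T) (Hloop : loopless e)
  (Hdeg : forall x, #|outN e x| + #|inN e x| >= #|T| + 3)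
  (z1 z2 c1 c2 : T) (X1 Y1 X2 Y2 : {set T}) :
  (forall v, (v \in ~: [set z1; z2; c1]) = (v \in X1) || (v \in Y1)) ->
  (forall v, v \in X1 -> v \notin Y1) ->
  #|X1| + #|Y1| + 3 = #|T| ->
  (forall x y, x \in X1 -> y \in Y1 -> ~~ e x y) ->
  (forall v, (v \in ~: [set z1; z2; c2]) = (v \in X2) || (v \in Y2)) ->
  (forall v, v \in X2 -> v \notin Y2) ->
  #|X2| + #|Y2| + 3 = #|T| ->
  (forall x y, x \in X2 -> y \in Y2 -> ~~ e x y) ->
  (forall y, y \in Y2 -> e c2 y) ->
  1 < #|Y2| -> 0 < #|Y1| -> c2 \in X1 -> False.
Proof.
move=> m1 d1 k1 n1 m2 d2 k2 n2 hc2 Y2big Y1ne c2X1.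
have [y yY1] : exists y, y \in Y1 by apply/set0Pn; rewrite -card_gt0.
have yS1 : y \in ~: [set z1; z2; c1] by rewrite m1 yY1 orbT.
have yc2 : y != c2 by apply/eqP => yc; move: (d1 _ c2X1); rewrite -yc yY1.
have yS2 : y \in ~: [set z1; z2; c2].
  by move: yS1; rewrite !in_setC !inE (negbTE yc2); case: (y == z1); case: (y == z2).
have yX2 : y \in X2.
  move: yS2; rewrite m2 => /orP[] // yY2.
  by move: (n1 _ _ c2X1 yY1); rewrite hc2.
have [w] : exists w, w \in Y2 :\ c1.
  apply/set0Pn; rewrite -card_gt0; move: Y2big; rewrite (cardsD1 c1 Y2).
  case: (c1 \in Y2) => /=; lia.
rewrite in_setD1 => /andP[wc1 wY2].
have wS2 : w \in ~: [set z1; z2; c2] by rewrite m2 wY2 orbT.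
have wS1 : w \in ~: [set z1; z2; c1].
  by move: wS2; rewrite !in_setC !inE (negbTE wc1); case: (w == z1); case: (w == z2).
have wX1 : w \in X1.
  move: wS1; rewrite m1 => /orP[] // wY1.
  by move: (n1 _ _ c2X1 wY1); rewrite hc2.
have wnY1 : w \notin Y1 by apply: d1.
have wnX2 : w \notin X2 by apply/negP => wX2; move: (d2 _ wX2); rewrite wY2.
have ynY2 : y \notin Y2 by apply: d2.
have ynX1 : y \notin X1 by apply/negP => yX1; move: (d1 _ yX1); rewrite yY1.
have o1 := outb_gen Hloop wnY1 (fun z zY => n1 _ _ wX1 zY).
have i1 := inb_gen Hloop wnX2 (fun z zX => n2 _ _ zX wY2).
have o2 := outb_gen Hloop ynY2 (fun z zY => n2 _ _ yX2 zY).
have i2 := inb_gen Hloop ynX1 (fun z zX => n1 _ _ zX yY1).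
move: (Hdeg w) (Hdeg y) o1 i1 o2 i2 k1 k2.
move: #|outN e w| #|inN e w| #|outN e y| #|inN e y| #|X1| #|Y1| #|X2| #|Y2| #|T|.
clear; lia.
Qed.

Arguments fail_struct {T e} Hloop Hdeg Hpair {S}.
Arguments core {T e} Hloop Hdeg {z1 z2 c1 c2 X1 Y1 X2 Y2}.

Theorem lemma9 (T : finType) (e : rel T) (Hloop : loopless e)
  (Hdeg : forall x, #|outN e x| + #|inN e x| >= #|T| + 3)
  (Hpair : forall x y, x != y -> #|outN e x| + #|inN e y| >= #|T| + 1)
  (z1 z2 : T) (Hz : z1 != z2) (Hnot : ~~ e z1 z2) :
  exists a, [/\ a \in outN e z1 :&: inN e z2 &
    strongly_connected_on e (~: [set z1; z2; a])].
Proof.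
have z1n : forall w, w \in outN e z1 -> (w != z1) && (w != z2).
  move=> w; rewrite inE => ew; apply/andP; split; apply/eqP => h; move: ew; rewrite h.
    by move: (Hloop z1) => /negbTE ->.
  by move/negbTE: Hnot => ->.
have z2n : forall w, w \in inN e z2 -> (w != z1) && (w != z2).
  move=> w; rewrite inE => ew; apply/andP; split; apply/eqP => h; move: ew; rewrite h.
    by move/negbTE: Hnot => ->.
  by move: (Hloop z2) => /negbTE ->.
have subU : outN e z1 :|: inN e z2 \subset ~: [set z1; z2].
  apply/subsetP => w; rewrite in_setU => /orP[] /[dup] H;
    [move/z1n: H | move/z2n: H] => /andP[h1 h2] _;
    by rewrite in_setC !inE negb_or h1 h2.
have cardC : #|outN e z1 :&: inN e z2| >= 3.
  have := subset_leq_card subU; have := cardsUI (outN e z1) (inN e z2).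
  have := cardsC [set z1; z2]; rewrite cards2 Hz.
  have := Hpair z1 z2 Hz; lia.
set C := outN e z1 :&: inN e z2 in cardC *.
have [c1 c1C] : exists c, c \in C by apply/set0Pn; rewrite -card_gt0; lia.
have [c2] : exists c, c \in C :\ c1.
  apply/set0Pn; rewrite -card_gt0; move: cardC; rewrite (cardsD1 c1 C) c1C /=; lia.
rewrite in_setD1 => /andP[c21 c2C].
have candP : forall c, c \in C -> [/\ z1 != c, z2 != c & #|[set z1; z2; c]| = 3].
  move=> c; rewrite in_setI => /andP[/z1n /andP[a1 a2] _].
  split; [by rewrite eq_sym | by rewrite eq_sym |].
  by rewrite setUC cardsU1 cards2 !inE negb_or Hz a1 a2.
have [a11 a12 HS1] := candP c1 c1C.
have [a21 a22 HS2] := candP c2 c2C.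
case: (classic (strongly_connected_on e (~: [set z1; z2; c1]))) => [h|f1].
  by exists c1.
case: (classic (strongly_connected_on e (~: [set z1; z2; c2]))) => [h|f2].
  by exists c2.
exfalso.
have [X1 [Y1 [m1 [d1 [k1 [n1 [xb1 [yb1 [eX1 eY1]]]]]]]]] :=
  fail_struct Hloop Hdeg Hpair HS1 f1.
have [X2 [Y2 [m2 [d2 [k2 [n2 [xb2 [yb2 [eX2 eY2]]]]]]]]] :=
  fail_struct Hloop Hdeg Hpair HS2 f2.
have c2S1 : c2 \in ~: [set z1; z2; c1].
  by rewrite in_setC !inE !negb_or c21 andbT (eq_sym c2 z1) (eq_sym c2 z2) a21 a22.
have c2S2 : c2 \in [set z1; z2; c2] by rewrite !inE eqxx !orbT.
move: c2S1; rewrite m1 => /orP[c2X1|c2Y1].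
  apply: (core Hloop Hdeg m1 d1 k1 n1 m2 d2 k2 n2 (fun y yY => eY2 _ _ c2S2 yY)) => //.
  exact: ltnW.
have Hloop' : loopless (fun x y => e y x) by move=> x; apply: Hloop.
have oE : forall x, outN (fun x y => e y x) x = inN e x by move=> x; apply/setP => w; rewrite !inE.
have iE : forall x, inN (fun x y => e y x) x = outN e x by move=> x; apply/setP => w; rewrite !inE.
have Hdeg' : forall x, #|outN (fun x y => e y x) x| + #|inN (fun x y => e y x) x| >= #|T| + 3.
  by move=> x; rewrite oE iE (addnC #|inN e x|); apply: Hdeg.
apply: (core Hloop' Hdeg' (X1 := Y1) (Y1 := X1) (X2 := Y2) (Y2 := X2)
          (c1 := c1) (c2 := c2) (z1 := z1) (z2 := z2)).
- by move=> v; rewrite m1 orbC.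
- by move=> v vY; apply/negP => vX; move: (d1 _ vX); rewrite vY.
- by rewrite (addnC #|Y1|).
- by move=> x y xY yX; apply: n1.
- by move=> v; rewrite m2 orbC.
- by move=> v vY; apply/negP => vX; move: (d2 _ vX); rewrite vY.
- by rewrite (addnC #|Y2|).
- by move=> x y xY yX; apply: n2.
- by move=> y yX; apply: eX2.
- done.
- exact: ltnW.
- done.
Qed.
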